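(* Let $\alpha\in\{0,1,2\}^*$ and let $c_\infty[\alpha]$ be the CQCA limit configuration on input $\alpha$. Let $e=(x_0,y_0)$ be a cell such that $e+N$ and $e+W$ are both defined in $c_\infty[\alpha]$, and let $s\in\{0,1\}$ be the sum bit of $e+W$. Let $\gamma$ be the base-$3'$ word given by the (defined) cells $(x_0,y)$, $y_0<y\le|\alpha|$. Then $s\equiv[\![\gamma]\!]_{3'}\pmod 2$; that is, $s=0$ iff $[\![\gamma]\!]_{3'}$ is even.
   Context: Notation: $E=(1,0)$, $W=(-1,0)$, $N=(0,1)$, $S=(0,-1)$ in $\mathbb{Z}^2$; $[P]\in\{0,1\}$ equals $1$ iff $P$ holds. Strings are indexed from the right. Base $3'$: words over $\{0,\bar0,1,\bar1\}$ with trit values $0\mapsto0$, $\bar0\mapsto1$, $1\mapsto1$, $\bar1\mapsto2$, and $[\![\gamma]\!]_{3'}=\sum_i\mathrm{val}(\gamma_i)3^i$. The symbols $0,\bar0,1,\bar1$ are identified with the cell states $(0,0),(0,1),(1,0),(1,1)$. The encoding $\mathrm{enc}:\{0,1,2\}^*\to\{0,\bar0,1,\bar1\}^*$ acts symbol by symbol: $0\mapsto0$, $2\mapsto\bar1$, and a digit $\alpha_i=1$ maps to $1$ if there exists $j<i$ with $\alpha_j\ne1$ and the largest such $j$ has $\alpha_j=2$, and to $\bar0$ otherwise. A vertical contiguous segment of defined cells gives the base-$3'$ word formed by the cells' states read from north (most significant) to south (least significant). The CQCA. State set $\Sigma=\{0,1,\bot\}^2\setminus\{(\bot,0),(\bot,1)\}$;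 a state $(s,c)$ has sum bit $s$ and carry bit $c$; it is undefined if $(\bot,\bot)$, half-defined if $s\in\{0,1\},c=\bot$, defined if $s,c\in\{0,1\}$. One step $F(C)$ of a configuration $C:\mathbb{Z}^2\to\Sigma$: first the non-local rule gives $C'$: $C'(u)=(0,1)$ if $C(u+W)=(1,\bot)$, $C(u)\in\{(0,\bot),(\bot,\bot)\}$ and $C(u+iE)\in\{(0,\bot),(\bot,\bot)\}$ for all $i\ge1$; otherwise $C'(u)=C(u)$. Then the local rule on $C'$ at all cells simultaneously: (i) if $C'(u)=(s,\bot)$ half-defined and $C'(u+E)=(s',c')$ defined, $F(C)(u)=(s,[s+s'+c'\ge2])$; (ii) if $C'(u)=(\bot,\bot)$, $C'(u+N)=(s,\bot)$ half-defined and $C'(u+N+E)=(s',c')$ defined, $F(C)(u)=((s+s'+c')\bmod2,\bot)$; (iii) otherwise $F(C)(u)=C'(u)$. For $\alpha\in\{0,1,2\}^*$ with $\gamma=\mathrm{enc}(\alpha)$, the initial configuration $c_0[\alpha]$ is: $c_0[\alpha](0,i)=\gamma_{i-1}$ for $1\le i\le|\alpha|$, $c_0[\alpha](x,|\alpha|)=(0,\bot)$ for all $x<0$, and $(\bot,\bot)$ elsewhere. Each cell's state in $F^i(c_0[\alpha])$ is eventually constant; $c_\infty[\alpha]$ is the pointwise limit. *)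

(* Defs.v *)
From Stdlib Require Import ZArith List Bool Arith Classical ClassicalEpsilon.
Import ListNotations.
Open Scope Z_scope.

(* Cell states: Sigma = {0,1,bot}^2 \ {(bot,0),(bot,1)}. *)
Inductive state : Type :=
| Und : state                      (* (bot, bot)            *)
| Half : bool -> state             (* (s, bot), half-defined *)
| Def : bool -> bool -> state.     (* (s, c), defined        *)

Definition cell := (Z * Z)%type.
Definition config := cell -> state.

Definition dirE : cell := (1, 0).
Definition dirW : cell := (-1, 0).
Definition dirN : cell := (0, 1).
Definition dirS : cell := (0, -1).
Definition cadd (u v : cell) : cell := (fst u + fst v, snd u + snd v).

Definition is_defined (st : state) : Prop :=
  match st with Def _ _ => True | _ => False end.

Definition zero_or_und (st : state) : Prop :=
  st = Half false \/ st = Und.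

Definition b2n (b : bool) : nat := if b then 1%nat else 0%nat.

Definition nonlocal_cond (C : config) (u : cell) : Prop :=
  C (cadd u dirW) = Half true /\ zero_or_und (C u) /\
  (forall i : Z, 1 <= i -> zero_or_und (C (cadd u (i * fst dirE, i * snd dirE)))).

Definition nonlocal (C : config) : config := fun u =>
  if excluded_middle_informative (nonlocal_cond C u) then Def false true else C u.

Definition local (C' : config) : config := fun u =>
  match C' u, C' (cadd u dirE) with
  | Half s, Def s' c' => Def s (Nat.leb 2 (b2n s + b2n s' + b2n c'))
  | Und, _ =>
      match C' (cadd u dirN), C' (cadd (cadd u dirN) dirE) with
      | Half s, Def s' c' => Half (Nat.odd (b2n s + b2n s' + b2n c'))
      | _, _ => Und
      end
  | st, _ => st
  end.

Definition F (C : config) : config := local (nonlocal C).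

Definition Fiter (n : nat) (C : config) : config := Nat.iter n F C.

Inductive trit : Type := T0 | T1 | T2.

(* A string alpha is written in reading order (leftmost = most significant);
   strings are indexed from the right: alpha_i is the i-th symbol from the right. *)
Definition ridx {A} (d : A) (l : list A) (i : nat) : A :=
  nth (length l - 1 - i)%nat l d.

(* encoding enc : {0,1,2}^* -> {0,0bar,1,1bar}^*, symbol i (from the right) *)
Definition enc_sym (alpha : list trit) (i : nat) : state :=
  match ridx T0 alpha i with
  | T0 => Def false false                          (* 0    *)
  | T2 => Def true true                            (* 1bar *)
  | T1 =>
      if excluded_middle_informative
           (exists j, (j < i)%nat /\ ridx T0 alpha j <> T1 /\
                      (forall k, (j < k < i)%nat -> ridx T0 alpha k = T1) /\
                      ridx T0 alpha j = T2)
      then Def true false                          (* 1    *)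
      else Def false true                          (* 0bar *)
  end.

Definition c0 (alpha : list trit) : config := fun u =>
  let n := Z.of_nat (length alpha) in
  if (fst u =? 0) && (1 <=? snd u) && (snd u <=? n)
  then enc_sym alpha (Z.to_nat (snd u - 1))
  else if (fst u <? 0) && (snd u =? n) then Half false
  else Und.

Definition is_limit (alpha : list trit) (cinf : config) : Prop :=
  forall u : cell, exists n0 : nat, forall n : nat, (n0 <= n)%nat ->
    Fiter n (c0 alpha) u = cinf u.

(* trit value of a base-3' symbol: 0->0, 0bar->1, 1->1, 1bar->2 *)
Definition sval (st : state) : nat :=
  match st with Def s c => (b2n s + b2n c)%nat | _ => 0%nat end.

(* value of a base-3' word gamma given as a list, least significant first *)
Fixpoint val3' (gamma : list state) : nat :=
  match gamma with
  | [] => 0%nat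
  | g :: gs => (sval g + 3 * val3' gs)%nat
  end.

(* the word formed by the cells (x0, y), y0 < y <= top, read north (most
   significant) to south (least significant); returned least significant first *)
Definition column_word (C : config) (x0 y0 top : Z) : list state :=
  map (fun k : nat => C (x0, y0 + 1 + Z.of_nat k))
      (seq 0 (Z.to_nat (top - y0))).

(* Main.v *)
Require Import Defs.
From Stdlib Require Import ZArith List Bool Arith Lia Classical ClassicalEpsilon.
Import ListNotations.
Open Scope Z_scope.

Lemma cE x y : cadd (x,y) dirE = (x+1,y).
Proof. unfold cadd, dirE; simpl; f_equal; lia. Qed.
Lemma cW x y : cadd (x,y) dirW = (x-1,y).
Proof. unfold cadd, dirW; simpl; f_equal; lia. Qed.
Lemma cN x y : cadd (x,y) dirN = (x,y+1).
Proof. unfold cadd, dirN; simpl; f_equal; lia. Qed.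

Definition sb (st : state) : option bool :=
  match st with Und => None | Half s => Some s | Def s _ => Some s end.

Definition loc4 (a b c d : state) : state :=
  match a, b with
  | Half s, Def s' c' => Def s (Nat.leb 2 (b2n s + b2n s' + b2n c'))
  | Und, _ =>
      match c, d with
      | Half s, Def s' c' => Half (Nat.odd (b2n s + b2n s' + b2n c'))
      | _, _ => Und
      end
  | st, _ => st
  end.

Lemma F_eq C x y : F C (x,y) =
  loc4 (nonlocal C (x,y)) (nonlocal C (x+1,y)) (nonlocal C (x,y+1)) (nonlocal C (x+1,y+1)).
Proof. unfold F, local, loc4. rewrite !cN, !cE. destruct (nonlocal C (x,y)); reflexivity. Qed.

Lemma L1 s c b c0 d : loc4 (Def s c) b c0 d = Def s c.
Proof. reflexivity. Qed.
Lemma L2 a b c d s : sb a = Some s -> sb (loc4 a b c d) = Some s.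
Proof. destruct a, b; simpl; intros H; try discriminate; auto. Qed.
Lemma L3 b c d : loc4 Und b c d <> Und -> exists s1 s' c', c = Half s1 /\ d = Def s' c' /\
   loc4 Und b c d = Half (Nat.odd (b2n s1 + b2n s' + b2n c')).
Proof. destruct c, d; simpl; intros H; try (exfalso; apply H; reflexivity); eauto 6. Qed.
Lemma L4 s b c d : is_defined (loc4 (Half s) b c d) -> is_defined b.
Proof. destruct b; simpl; auto. Qed.
Lemma L5 s b c d : is_defined b -> is_defined (loc4 (Half s) b c d).
Proof. destruct b; simpl; auto. Qed.
Lemma L6 a b c d s : c = Half s -> is_defined d -> loc4 a b c d <> Und.
Proof. intros -> Hd. destruct d; simpl in Hd; try contradiction.
  destruct a; simpl; try discriminate. destruct b; discriminate. Qed.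
Lemma L7 a b c d : is_defined a -> is_defined (loc4 a b c d).
Proof. destruct a; simpl; try contradiction; destruct b; simpl; auto. Qed.

Lemma nl_cases C x y : nonlocal C (x,y) = C (x,y) \/
  (nonlocal C (x,y) = Def false true /\ C (x-1,y) = Half true /\
   (C (x,y) = Half false \/ C (x,y) = Und)).
Proof.
  unfold nonlocal. destruct (excluded_middle_informative _) as [H|H]; [right|left; reflexivity].
  destruct H as [H1 [H2 _]]. rewrite cW in H1. unfold zero_or_und in H2. auto.
Qed.
Lemma nl_half C u s : nonlocal C u = Half s -> C u = Half s.
Proof. unfold nonlocal. destruct (excluded_middle_informative _); auto; discriminate. Qed.
Lemma nl_und C u : nonlocal C u = Und -> C u = Und.
Proof. unfold nonlocal. destruct (excluded_middle_informative _); auto; discriminate. Qed.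
Lemma nl_def_inv C x y s c : nonlocal C (x,y) = Def s c ->
  C (x,y) = Def s c \/ (s = false /\ c = true /\ C (x-1,y) = Half true).
Proof. intros H. destruct (nl_cases C x y) as [E|[E [W _]]].
  - left; congruence.
  - right. rewrite E in H. inversion H; auto. Qed.
Lemma nl_of_def C u s c : C u = Def s c -> nonlocal C u = Def s c.
Proof. unfold nonlocal. destruct (excluded_middle_informative _) as [[_ [Z _]]|]; auto.
  intros H; rewrite H in Z; destruct Z; discriminate. Qed.
Lemma nl_sb C u s : sb (C u) = Some s -> sb (nonlocal C u) = Some s.
Proof. unfold nonlocal. destruct (excluded_middle_informative _) as [[_ [Z _]]|]; auto.
  destruct Z as [Z|Z]; rewrite Z; simpl; congruence. Qed.

Lemma def_nonund st : is_defined st -> st <> Und.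
Proof. destruct st; simpl; try contradiction; discriminate. Qed.
Lemma sb_nonund st : st <> Und -> exists s, sb st = Some s.
Proof. destruct st; simpl; eauto. intros H; exfalso; apply H; reflexivity. Qed.
Lemma sb_some_nonund st s : sb st = Some s -> st <> Und.
Proof. destruct st; simpl; discriminate. Qed.

Lemma F_def C x y s c : C (x,y) = Def s c -> F C (x,y) = Def s c.
Proof. intros H. rewrite F_eq, (nl_of_def _ _ _ _ H). reflexivity. Qed.
Lemma F_nldef C x y : is_defined (nonlocal C (x,y)) -> is_defined (F C (x,y)).
Proof. intros H. rewrite F_eq. apply L7; auto. Qed.
Lemma F_of_nldef C x y s c : nonlocal C (x,y) = Def s c -> F C (x,y) = Def s c.
Proof. intros H. rewrite F_eq, H. reflexivity. Qed.
Lemma F_isdef C x y : is_defined (C (x,y)) -> is_defined (F C (x,y)).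
Proof. intros H. destruct (C (x,y)) eqn:E; simpl in H; try contradiction.
  rewrite (F_def _ _ _ _ _ E); exact I. Qed.
Lemma F_sb C x y s : sb (C (x,y)) = Some s -> sb (F C (x,y)) = Some s.
Proof. intros H. rewrite F_eq. apply L2, nl_sb, H. Qed.
Lemma F_nonund C x y : C (x,y) <> Und -> F C (x,y) <> Und.
Proof. intros H. destruct (sb_nonund _ H) as [s Hs]. apply (sb_some_nonund _ s), F_sb, Hs. Qed.
Lemma F_und_inv C x y : F C (x,y) = Und -> C (x,y) = Und.
Proof. intros H. destruct (C (x,y)) eqn:E; auto; exfalso; apply (F_nonund C x y); auto;
  rewrite E; discriminate. Qed.
Lemma F_new C x y : C (x,y) = Und -> F C (x,y) <> Und ->
  (F C (x,y) = Def false true /\ C (x-1,y) = Half true) \/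
  (exists s1 s' c', C (x,y+1) = Half s1 /\ nonlocal C (x+1,y+1) = Def s' c' /\
     F C (x,y) = Half (Nat.odd (b2n s1 + b2n s' + b2n c'))).
Proof.
  intros HU HF. rewrite F_eq in *. destruct (nl_cases C x y) as [E|[E [W _]]]; rewrite E in *.
  - rewrite HU in *. right. destruct (L3 _ _ _ HF) as (s1&s'&c'&Hc&Hd&He).
    exists s1, s', c'. split; [apply nl_half; auto|]. split; auto.
  - left. auto.
Qed.
Lemma F_halfdef C x y s : C (x,y) = Half s -> is_defined (F C (x,y)) ->
  (nonlocal C (x,y) = Half s /\ is_defined (nonlocal C (x+1,y))) \/
  (s = false /\ F C (x,y) = Def false true /\ C (x-1,y) = Half true).
Proof.
  intros H HD. destruct (nl_cases C x y) as [E|[E [W Z]]].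
  - left. rewrite H in E. split; auto. rewrite F_eq, E in HD. eapply L4; eauto.
  - right. rewrite H in Z. destruct Z as [Z|Z]; inversion Z; subst. split; auto.
    split; auto. apply F_of_nldef; auto.
Qed.
Lemma F_below C x y s : nonlocal C (x,y+1) = Half s -> is_defined (nonlocal C (x+1,y+1)) ->
  F C (x,y) <> Und.
Proof. intros H1 H2. rewrite F_eq. eapply L6; eauto. Qed.
Lemma F_half_east C x y s : C (x,y) = Half s -> is_defined (C (x+1,y)) -> is_defined (F C (x,y)).
Proof.
  intros H HE. destruct (nl_cases C x y) as [E|[E [W Z]]].
  - rewrite F_eq, E, H. apply L5. destruct (C (x+1,y)) eqn:E2; simpl in HE; try contradiction.
    rewrite (nl_of_def _ _ _ _ E2). exact I.
  - apply F_nldef. rewrite E. exact I.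
Qed.

Lemma cw_cons C x y n : y < n -> column_word C x y n = C (x,y+1) :: column_word C x (y+1) n.
Proof.
  intros H. unfold column_word. replace (Z.to_nat (n - y)) with (S (Z.to_nat (n - (y+1)))) by lia.
  simpl seq. cbn [map]. rewrite <- seq_shift, map_map. f_equal.
  - f_equal. f_equal. lia.
  - apply map_ext. intros k. f_equal. f_equal. rewrite Nat2Z.inj_succ. lia.
Qed.

Lemma cw_ext C D x y n : (forall y', y < y' <= n -> C (x,y') = D (x,y')) ->
  column_word C x y n = column_word D x y n.
Proof. intros H. unfold column_word. apply map_ext_in. intros k Hk. apply in_seq in Hk.
  apply H. lia. Qed.

Lemma col_def (C : config) (n x y : Z) : (forall x y, y < n -> is_defined (C (x,y)) -> is_defined (C (x,y+1))) ->
  is_defined (C (x,y)) -> forall y', y <= y' <= n -> is_defined (C (x,y')).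
Proof.
  intros H4 Hd y' Hy. replace y' with (y + Z.of_nat (Z.to_nat (y'-y))) by lia.
  assert (Hk: y + Z.of_nat (Z.to_nat (y'-y)) <= n) by lia. revert Hk.
  generalize (Z.to_nat (y'-y)). intros k; induction k; intros Hk.
  - simpl. rewrite Z.add_0_r. auto.
  - rewrite Nat2Z.inj_succ. replace (y + Z.succ (Z.of_nat k)) with (y + Z.of_nat k + 1) by lia.
    apply H4; [lia|]. apply IHk. lia.
Qed.

Lemma b2n_odd k : b2n (Nat.odd k) = (k mod 2)%nat.
Proof.
  destruct (Nat.odd k) eqn:E; unfold b2n.
  - apply Nat.odd_spec in E. destruct E as [m ->]. rewrite Nat.add_comm, Nat.mul_comm, Nat.Div0.mod_add. reflexivity.
  - assert (E2: Nat.even k = true) by (rewrite <- Nat.negb_odd, E; reflexivity).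
    apply Nat.even_spec in E2. destruct E2 as [m ->]. rewrite Nat.mul_comm, Nat.Div0.mod_mul. reflexivity.
Qed.

Record Inv (n : Z) (C : config) : Prop := {
 i1 : forall x y, (1 <= x \/ n < y) -> C (x,y) = Und;
 i2 : forall x y s, C (x,y) = Half s -> x < 0;
 i6 : forall x y, x < 0 -> y < n -> C (x,y) <> Und -> is_defined (C (x+1,y+1));
 i7 : forall x y, y < n -> C (x,y) <> Und -> C (x,y+1) <> Und;
 i4 : forall x y, y < n -> is_defined (C (x,y)) -> is_defined (C (x,y+1));
 iR : forall x y, x < 0 -> is_defined (C (x,y+1)) -> C (x,y) = Und ->
        C (x,y+1) = Def false true /\ sb (C (x-1,y+1)) = Some true;
 i5 : forall a y, C (a,y) = Half true -> C (a+1,y) = Und -> a = -1;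
 iP : forall x y s, x < 0 -> sb (C (x,y)) = Some s ->
        (b2n s mod 2 = val3' (column_word C (x+1) y n) mod 2)%nat
}.

Lemma enc_def alpha i : is_defined (enc_sym alpha i).
Proof. unfold enc_sym. destruct (ridx T0 alpha i); simpl; auto.
  destruct (excluded_middle_informative _); simpl; auto. Qed.

Lemma c0_cases alpha x y :
  (x = 0 /\ 1 <= y <= Z.of_nat (length alpha) /\ is_defined (c0 alpha (x,y))) \/
  (x < 0 /\ y = Z.of_nat (length alpha) /\ c0 alpha (x,y) = Half false) \/
  (c0 alpha (x,y) = Und /\ ~(x = 0 /\ 1 <= y <= Z.of_nat (length alpha)) /\
     ~(x < 0 /\ y = Z.of_nat (length alpha))).
Proof.
  unfold c0. cbv zeta. simpl fst; simpl snd.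
  destruct (Z.eqb_spec x 0), (Z.leb_spec 1 y), (Z.leb_spec y (Z.of_nat (length alpha))),
    (Z.ltb_spec x 0), (Z.eqb_spec y (Z.of_nat (length alpha))); simpl;
  first [ left; split; [lia|split;[lia|apply enc_def]]
        | right; left; repeat split; lia
        | right; right; split; [reflexivity | split; intros [? ?]; lia] ].
Qed.

Lemma Inv_c0 alpha : Inv (Z.of_nat (length alpha)) (c0 alpha).
Proof.
  constructor.
  - intros x y Hxy. destruct (c0_cases alpha x y) as [(?&?&?)|[(?&?&?)|(?&?&?)]]; [lia|lia|assumption].
  - intros x y s H. destruct (c0_cases alpha x y) as [(?&?&D)|[(?&?&?)|(U&?&?)]].
    + rewrite H in D; simpl in D; contradiction.
    + assumption.
    + rewrite H in U; discriminate.
  - intros x y Hx Hy HU. destruct (c0_cases alpha x y) as [(?&?&D)|[(?&?&?)|(U&?&?)]]; [lia|lia|contradiction].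
  - intros x y Hy HU. destruct (c0_cases alpha x y) as [(?&?&D)|[(?&?&?)|(U&?&?)]]; [|lia|contradiction].
    destruct (c0_cases alpha x (y+1)) as [(?&?&D2)|[(?&?&?)|(U2&N1&?)]].
    + apply def_nonund; auto.
    + lia.
    + exfalso; apply N1; split; lia.
  - intros x y Hy HD. destruct (c0_cases alpha x y) as [(?&?&D)|[(?&?&E)|(U&?&?)]].
    + destruct (c0_cases alpha x (y+1)) as [(?&?&D2)|[(?&?&?)|(U2&N1&?)]]; auto.
      * lia.
      * exfalso; apply N1; split; lia.
    + rewrite E in HD; simpl in HD; contradiction.
    + rewrite U in HD; simpl in HD; contradiction.
  - intros x y Hx HD HU. destruct (c0_cases alpha x (y+1)) as [(?&?&D)|[(?&?&E)|(U&?&?)]].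
    + lia.
    + rewrite E in HD; simpl in HD; contradiction.
    + rewrite U in HD; simpl in HD; contradiction.
  - intros a y H _. destruct (c0_cases alpha a y) as [(?&?&D)|[(?&?&E)|(U&?&?)]].
    + rewrite H in D; simpl in D; contradiction.
    + rewrite H in E; discriminate.
    + rewrite H in U; discriminate.
  - intros x y s Hx Hs. destruct (c0_cases alpha x y) as [(?&?&D)|[(?&Ey&E)|(U&?&?)]].
    + lia.
    + rewrite E in Hs; simpl in Hs; inversion Hs; subst. unfold column_word.
      rewrite Z.sub_diag. reflexivity.
    + rewrite U in Hs; discriminate.
Qed.

Lemma par_helper (a b c V : nat) : (a mod 2 = V mod 2 ->
  ((a+b+c) mod 2) mod 2 = (b + c + (V + (V + (V + 0)))) mod 2)%nat.
Proof. intros H. rewrite Nat.Div0.mod_mod.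
  replace (a+b+c)%nat with (b + c + a)%nat by lia.
  replace (b + c + (V + (V + (V + 0))))%nat with (b + c + V + V * 2)%nat by lia.
  rewrite Nat.Div0.mod_add. rewrite Nat.Div0.add_mod, H, <- Nat.Div0.add_mod. reflexivity. Qed.

Section Pres.
Variable n : Z.
Variable C : config.
Hypothesis H : Inv n C.

Lemma F_i1 x y : (1 <= x \/ n < y) -> F C (x,y) = Und.
Proof.
  intros Hxy. assert (HU := i1 _ _ H x y Hxy).
  destruct (F C (x,y)) eqn:EF; [reflexivity| |];
  (assert (FN: F C (x,y) <> Und) by (rewrite EF; discriminate));
  destruct (F_new C x y HU FN) as [[_ W]|(s1&s'&c'&Hc&_&_)].
  all: try (pose proof (i2 _ _ H _ _ _ W) as Hx;
       rewrite (i1 _ _ H (x-1) y) in W; [discriminate| lia]).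
  all: pose proof (i2 _ _ H _ _ _ Hc) as Hx;
       rewrite (i1 _ _ H x (y+1)) in Hc; [discriminate| lia].
Qed.

Lemma F_i2 x y s : F C (x,y) = Half s -> x < 0.
Proof.
  intros HF. destruct (C (x,y)) eqn:E.
  - assert (FN: F C (x,y) <> Und) by (rewrite HF; discriminate).
    destruct (F_new C x y E FN) as [[D _]|(s1&s'&c'&Hc&_&_)].
    + rewrite HF in D; discriminate.
    + exact (i2 _ _ H _ _ _ Hc).
  - exact (i2 _ _ H _ _ _ E).
  - rewrite (F_def _ _ _ _ _ E) in HF; discriminate.
Qed.

Lemma F_i6 x y : x < 0 -> y < n -> F C (x,y) <> Und -> is_defined (F C (x+1,y+1)).
Proof.
  intros Hx Hy HF. destruct (C (x,y)) eqn:E.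
  - destruct (F_new C x y E HF) as [[D W]|(s1&s'&c'&Hc&Hd&_)].
    + exfalso. assert (E' : C (x-1+1,y) = Und) by (replace (x-1+1) with x by lia; auto).
      pose proof (i5 _ _ H _ _ W E'). lia.
    + apply F_nldef. rewrite Hd. exact I.
  - apply F_isdef. apply (i6 _ _ H); auto. rewrite E; discriminate.
  - apply F_isdef. apply (i6 _ _ H); auto. rewrite E; discriminate.
Qed.

Lemma W_half_def x y : y < n -> C (x-1,y) = Half true -> is_defined (C (x,y+1)).
Proof.
  intros Hy W. pose proof (i2 _ _ H _ _ _ W) as Hx.
  pose proof (i6 _ _ H (x-1) y Hx Hy) as D. replace (x-1+1) with x in D by lia.
  apply D. rewrite W; discriminate.
Qed.

Lemma F_i7 x y : y < n -> F C (x,y) <> Und -> F C (x,y+1) <> Und.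
Proof.
  intros Hy HF. destruct (C (x,y)) eqn:E.
  - destruct (F_new C x y E HF) as [[D W]|(s1&s'&c'&Hc&Hd&_)].
    + apply def_nonund, F_isdef, W_half_def; auto.
    + apply F_nonund. rewrite Hc; discriminate.
  - apply F_nonund, (i7 _ _ H); auto. rewrite E; discriminate.
  - apply F_nonund, (i7 _ _ H); auto. rewrite E; discriminate.
Qed.

Lemma F_i4 x y : y < n -> is_defined (F C (x,y)) -> is_defined (F C (x,y+1)).
Proof.
  intros Hy HD. destruct (C (x,y)) eqn:E.
  - destruct (F_new C x y E (def_nonund _ HD)) as [[D W]|(s1&s'&c'&Hc&Hd&He)].
    + apply F_isdef, W_half_def; auto.
    + rewrite He in HD; simpl in HD; contradiction.
  - destruct (F_halfdef C x y b E HD) as [[N1 N2]|(_&_&W)].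
    + pose proof (i2 _ _ H _ _ _ E) as Hx.
      assert (NU: C (x,y) <> Und) by (rewrite E; discriminate).
      pose proof (i6 _ _ H x y Hx Hy NU) as D1.
      pose proof (i7 _ _ H x y Hy NU) as N3.
      destruct (C (x,y+1)) eqn:E2.
      * contradiction.
      * eapply F_half_east; eauto.
      * apply F_isdef. rewrite E2; exact I.
    + apply F_isdef, W_half_def; auto.
  - apply F_isdef, (i4 _ _ H); auto. rewrite E; exact I.
Qed.

Lemma F_iR x y : x < 0 -> is_defined (F C (x,y+1)) -> F C (x,y) = Und ->
  F C (x,y+1) = Def false true /\ sb (F C (x-1,y+1)) = Some true.
Proof.
  intros Hx HD HFU. pose proof (F_und_inv _ _ _ HFU) as HU.
  destruct (C (x,y+1)) eqn:E.
  - destruct (F_new C x (y+1) E (def_nonund _ HD)) as [[D W]|(s1&s'&c'&Hc&Hd&He)].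
    + split; auto. apply F_sb. rewrite W; reflexivity.
    + rewrite He in HD; simpl in HD; contradiction.
  - destruct (F_halfdef C x (y+1) b E HD) as [[N1 N2]|(_&D&W)].
    + exfalso. exact (F_below C x y b N1 N2 HFU).
    + split; auto. apply F_sb. rewrite W; reflexivity.
  - assert (D0: is_defined (C (x,y+1))) by (rewrite E; exact I).
    destruct (iR _ _ H x y Hx D0 HU) as [E1 E2].
    split. + apply F_def; auto. + apply F_sb; auto.
Qed.

Lemma F_i5 a y : F C (a,y) = Half true -> F C (a+1,y) = Und -> a = -1.
Proof.
  intros HF HF2. pose proof (F_und_inv _ _ _ HF2) as HU1.
  destruct (C (a,y)) eqn:E.
  - assert (FN: F C (a,y) <> Und) by (rewrite HF; discriminate).
    destruct (F_new C a y E FN) as [[D _]|(s1&s'&c'&Hc&Hd&He)].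
    + rewrite HF in D; discriminate.
    + pose proof (i2 _ _ H _ _ _ Hc) as Ha.
      destruct (Z.eq_dec a (-1)) as [|Hne]; auto. exfalso.
      assert (Hs1 : s1 = true /\ s' = false /\ c' = true).
      { destruct (nl_def_inv C (a+1) (y+1) s' c' Hd) as [D1|(Es&Ec&W)].
        - assert (D0 : is_defined (C (a+1,y+1))) by (rewrite D1; exact I).
          destruct (iR _ _ H (a+1) y ltac:(lia) D0 HU1) as [E1 E2].
          replace (a+1-1) with a in E2 by lia. rewrite Hc in E2. simpl in E2.
          rewrite D1 in E1. inversion E1; inversion E2; auto.
        - replace (a+1-1) with a in W by lia. rewrite Hc in W. inversion W; auto. }
      destruct Hs1 as (->&->&->). rewrite HF in He. simpl in He. discriminate.
  - assert (Eb : sb (F C (a,y)) = Some b) by (apply F_sb; rewrite E; reflexivity).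
    rewrite HF in Eb; simpl in Eb; inversion Eb; subst.
    exact (i5 _ _ H _ _ E HU1).
  - rewrite (F_def _ _ _ _ _ E) in HF; discriminate.
Qed.

Lemma F_agree x y : is_defined (C (x,y+1)) -> forall y', y < y' <= n -> F C (x,y') = C (x,y').
Proof.
  intros D y' Hy'. assert (D2 : is_defined (C (x,y'))).
  { apply (col_def C n x (y+1)); auto. apply (i4 _ _ H). lia. }
  destruct (C (x,y')) eqn:E; simpl in D2; try contradiction. apply F_def; auto.
Qed.

Lemma F_iP x y s : x < 0 -> sb (F C (x,y)) = Some s ->
  (b2n s mod 2 = val3' (column_word (F C) (x+1) y n) mod 2)%nat.
Proof.
  intros Hx Hs. destruct (C (x,y)) eqn:E.
  - assert (FN := sb_some_nonund _ _ Hs).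
    destruct (F_new C x y E FN) as [[D W]|(s1&s'&c'&Hc&Hd&He)].
    + exfalso. assert (E' : C (x-1+1,y) = Und) by (replace (x-1+1) with x by lia; auto).
      pose proof (i5 _ _ H _ _ W E'). lia.
    + rewrite He in Hs. simpl in Hs. inversion Hs; subst s.
      assert (Hy1 : y + 1 <= n).
      { destruct (Z_le_gt_dec (y+1) n); auto. rewrite (i1 _ _ H x (y+1)) in Hc; [discriminate|lia]. }
      rewrite cw_cons by lia.
      rewrite (F_of_nldef _ _ _ _ _ Hd).
      assert (IH := iP _ _ H x (y+1) s1 Hx ltac:(rewrite Hc; reflexivity)).
      rewrite (cw_ext (F C) C (x+1) (y+1) n).
      2:{ intros y' Hy'. apply F_agree with (y := y+1); [|lia].
          apply (i6 _ _ H); [lia|lia|rewrite Hc; discriminate]. }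
      rewrite b2n_odd. simpl val3'. simpl sval. apply par_helper; auto.
  - assert (Eb : sb (F C (x,y)) = Some b) by (apply F_sb; rewrite E; reflexivity).
    rewrite Hs in Eb. inversion Eb; subst b.
    assert (IH := iP _ _ H x y s Hx ltac:(rewrite E; reflexivity)).
    rewrite (cw_ext (F C) C (x+1) y n); auto.
    intros y' Hy'. apply F_agree with (y := y); [|lia].
    apply (i6 _ _ H); [lia|lia|rewrite E; discriminate].
  - assert (Eb : sb (F C (x,y)) = Some b) by (apply F_sb; rewrite E; reflexivity).
    rewrite Hs in Eb. inversion Eb; subst b.
    assert (IH := iP _ _ H x y s Hx ltac:(rewrite E; reflexivity)).
    rewrite (cw_ext (F C) C (x+1) y n); auto.
    intros y' Hy'. apply F_agree with (y := y); [|lia].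
    apply (i6 _ _ H); [lia|lia|rewrite E; discriminate].
Qed.

End Pres.

Lemma Inv_F n C : Inv n C -> Inv n (F C).
Proof.
  intros H. constructor.
  - exact (F_i1 n C H).
  - exact (F_i2 n C H).
  - exact (F_i6 n C H).
  - exact (F_i7 n C H).
  - exact (F_i4 n C H).
  - exact (F_iR n C H).
  - exact (F_i5 n C H).
  - exact (F_iP n C H).
Qed.

Lemma Inv_iter alpha k : Inv (Z.of_nat (length alpha)) (Fiter k (c0 alpha)).
Proof. induction k. - apply Inv_c0. - unfold Fiter in *. simpl. apply Inv_F; auto. Qed.

Lemma limit_list alpha cinf : is_limit alpha cinf -> forall l : list cell,
  exists T, forall u, In u l -> forall m, (T <= m)%nat -> Fiter m (c0 alpha) u = cinf u.
Proof.
  intros Hl l. induction l as [|u l IH].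
  - exists 0%nat. intros u [].
  - destruct IH as [T HT]. destruct (Hl u) as [n0 Hn0]. exists (Nat.max n0 T).
    intros v [<-|Hv] m Hm.
    + apply Hn0. lia.
    + apply HT; auto. lia.
Qed.

Theorem mainTheorem5 (alpha : list trit) (cinf : config) (x0 y0 : Z) :
  is_limit alpha cinf ->
  is_defined (cinf (cadd (x0, y0) dirN)) ->
  is_defined (cinf (cadd (x0, y0) dirW)) ->
  forall s c : bool, cinf (cadd (x0, y0) dirW) = Def s c ->
  (forall y : Z, y0 < y <= Z.of_nat (length alpha) -> is_defined (cinf (x0, y))) /\
  ((b2n s) mod 2 = (val3' (column_word cinf x0 y0 (Z.of_nat (length alpha)))) mod 2)%nat.
Proof.
  intros Hl HN HW s c Hs. rewrite cN in HN. rewrite cW in HW, Hs.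
  set (n := Z.of_nat (length alpha)).
  destruct (limit_list alpha cinf Hl ((x0,y0+1) :: (x0-1,y0) ::
      map (fun k => (x0, y0 + 1 + Z.of_nat k)) (seq 0 (Z.to_nat (n - y0))))) as [T HT].
  set (C := Fiter T (c0 alpha)).
  assert (HI : Inv n C) by apply Inv_iter.
  assert (EN : C (x0,y0+1) = cinf (x0,y0+1)) by (apply HT; [left; reflexivity| lia]).
  assert (EW : C (x0-1,y0) = cinf (x0-1,y0)) by (apply HT; [right; left; reflexivity| lia]).
  assert (Ecol : forall y, y0 < y <= n -> C (x0,y) = cinf (x0,y)).
  { intros y Hy. apply HT; [|lia]. right; right. apply in_map_iff.
    exists (Z.to_nat (y - y0 - 1)). split; [f_equal; lia| apply in_seq; lia]. }
  assert (HNC : is_defined (C (x0,y0+1))) by (rewrite EN; exact HN).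
  assert (Hdef : forall y, y0 < y <= n -> is_defined (C (x0,y))).
  { intros y Hy. apply (col_def C n x0 (y0+1)); auto; [apply (i4 _ _ HI)|lia]. }
  split.
  - intros y Hy. rewrite <- Ecol; auto.
  - assert (Hx0 : x0 - 1 < 0).
    { destruct (Z_lt_le_dec (x0-1) 0); auto.
      rewrite (i1 _ _ HI x0 (y0+1)) in HNC; [simpl in HNC; contradiction| lia]. }
    assert (P := iP _ _ HI (x0-1) y0 s Hx0 ltac:(rewrite EW, Hs; reflexivity)).
    replace (x0-1+1) with x0 in P by lia.
    rewrite (cw_ext C cinf x0 y0 n) in P; auto.
Qed.
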